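(* Let $G$ be a bounded metric operator in $\mathcal H$ and $A$ a closed densely defined operator in $\mathcal H$. If $A$ is self-adjoint in $\mathcal H(G)$, then $GA$ is symmetric in $\mathcal H$ and $A$ is quasi-Hermitian with respect to $G$. If moreover $G^{-1}$ is bounded, then $A$ is self-adjoint in $\mathcal H(G)$ if and only if $GA$ is self-adjoint in $\mathcal H$.
   Context: A metric operator in $\mathcal H$ is a self-adjoint operator $G$ with $\langle G\xi,\xi\rangle>0$ for all nonzero $\xi\in D(G)$. For bounded metric $G$, $\mathcal H(G)$ is the completion of $\mathcal H$ under $\|\xi\|_G=\|G^{1/2}\xi\|$ with inner product $\langle\xi,\eta\rangle_G=\langle G^{1/2}\xi,G^{1/2}\eta\rangle$; $D(A)$ is dense in $\mathcal H(G)$, and ''$A$ is self-adjoint in $\mathcal H(G)$'' means $A=A^\#$, where $A^\#$ is the adjoint in $\mathcal H(G)$ of $A$ viewed as an operator in $\mathcal H(G)$ with domain $D(A)$. $A$ is quasi-Hermitian with respect to $G$ if $D(A)\subseteq D(G)$ and $\langle A\xi,G\eta\rangle=\langle G\xi,A\eta\rangle$ for all $\xi,\eta\in D(A)$. *)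

(* Defs.v *)
From Stdlib Require Import Reals.
Open Scope R_scope.
Set Implicit Arguments.

Record Cx : Type := mkC { Cre : R; Cim : R }.
Definition C0 : Cx := mkC 0 0.
Definition C1 : Cx := mkC 1 0.
Definition Cadd (a b : Cx) : Cx := mkC (Cre a + Cre b) (Cim a + Cim b).
Definition Cmul (a b : Cx) : Cx :=
  mkC (Cre a * Cre b - Cim a * Cim b) (Cre a * Cim b + Cim a * Cre b).
Definition Cconj (a : Cx) : Cx := mkC (Cre a) (- Cim a).

(** Complex inner product spaces (inner product linear in the first argument,
    conjugate-linear in the second). *)
Record InnerSpace : Type := {
  car :> Type;
  vadd : car -> car -> car;
  vzero : car;
  vopp : car -> car;
  vscal : Cx -> car -> car;
  inner : car -> car -> Cx;
  vadd_assoc : forall x y z, vadd x (vadd y z) = vadd (vadd x y) z;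
  vadd_comm : forall x y, vadd x y = vadd y x;
  vadd_zero : forall x, vadd x vzero = x;
  vadd_opp : forall x, vadd x (vopp x) = vzero;
  vscal_addv : forall a x y, vscal a (vadd x y) = vadd (vscal a x) (vscal a y);
  vscal_adds : forall a b x, vscal (Cadd a b) x = vadd (vscal a x) (vscal b x);
  vscal_mul : forall a b x, vscal (Cmul a b) x = vscal a (vscal b x);
  vscal_one : forall x, vscal C1 x = x;
  inner_add_l : forall x y z, inner (vadd x y) z = Cadd (inner x z) (inner y z);
  inner_scal_l : forall a x y, inner (vscal a x) y = Cmul a (inner x y);
  inner_conj : forall x y, inner y x = Cconj (inner x y);
  inner_pos : forall x, 0 <= Cre (inner x x);
  inner_def : forall x, Cre (inner x x) = 0 -> x = vzero
}.

Arguments vadd {_} _ _.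
Arguments vopp {_} _.
Arguments vscal {_} _ _.
Arguments inner {_} _ _.

Definition vsub {X : InnerSpace} (x y : X) : X := vadd x (vopp y).
Definition norm {X : InnerSpace} (x : X) : R := sqrt (Cre (inner x x)).

Definition converges {X : InnerSpace} (u : nat -> X) (x : X) : Prop :=
  forall eps, 0 < eps -> exists N, forall n, (N <= n)%nat -> norm (vsub (u n) x) < eps.
Definition cauchy {X : InnerSpace} (u : nat -> X) : Prop :=
  forall eps, 0 < eps -> exists N, forall n m, (N <= n)%nat -> (N <= m)%nat ->
    norm (vsub (u n) (u m)) < eps.
Definition complete (X : InnerSpace) : Prop :=
  forall u : nat -> X, cauchy u -> exists x, converges u x.

Record HilbertSpace : Type := {
  hs :> InnerSpace;
  hs_complete : complete hs
}.

Definition linear_map {X Y : InnerSpace} (f : X -> Y) : Prop :=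
  forall a x y, f (vadd x y) = vadd (f x) (f y) /\ f (vscal a x) = vscal a (f x).
Definition bounded_map {X Y : InnerSpace} (f : X -> Y) : Prop :=
  exists M, forall x, norm (f x) <= M * norm x.
Definition dense {X : InnerSpace} (D : X -> Prop) : Prop :=
  forall x eps, 0 < eps -> exists y, D y /\ norm (vsub x y) < eps.

Definition linear_op {X : InnerSpace} (D : X -> Prop) (f : X -> X) : Prop :=
  D (vzero X) /\
  (forall x y, D x -> D y -> D (vadd x y) /\ f (vadd x y) = vadd (f x) (f y)) /\
  (forall a x, D x -> D (vscal a x) /\ f (vscal a x) = vscal a (f x)).
Definition closed_op {X : InnerSpace} (D : X -> Prop) (f : X -> X) : Prop :=
  forall (u : nat -> X) x y, (forall n, D (u n)) -> converges u x ->
    converges (fun n => f (u n)) y -> D x /\ f x = y.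

(** Operators as graphs (relations); the graph of (D, f). *)
Definition graph_of {X : InnerSpace} (D : X -> Prop) (f : X -> X) : X -> X -> Prop :=
  fun x y => D x /\ y = f x.
Definition gdom {X : InnerSpace} (T : X -> X -> Prop) : X -> Prop :=
  fun x => exists y, T x y.
Definition adjoint_graph {X : InnerSpace} (T : X -> X -> Prop) : X -> X -> Prop :=
  fun eta zeta => forall xi y, T xi y -> inner y eta = inner xi zeta.
Definition symmetric_op {X : InnerSpace} (T : X -> X -> Prop) : Prop :=
  dense (gdom T) /\ forall eta zeta, T eta zeta -> adjoint_graph T eta zeta.
Definition self_adjoint {X : InnerSpace} (T : X -> X -> Prop) : Prop :=
  dense (gdom T) /\ forall eta zeta, T eta zeta <-> adjoint_graph T eta zeta.

Definition Cpos (z : Cx) : Prop := Cim z = 0 /\ 0 < Cre z.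
Definition bounded_metric {X : InnerSpace} (G : X -> X) : Prop :=
  linear_map G /\ bounded_map G /\ self_adjoint (graph_of (fun _ => True) G) /\
  forall x, x <> vzero X -> Cpos (inner (G x) x).

Definition pos_sqrt {X : InnerSpace} (S G : X -> X) : Prop :=
  linear_map S /\ bounded_map S /\ self_adjoint (graph_of (fun _ => True) S) /\
  (forall x, Cim (inner (S x) x) = 0 /\ 0 <= Cre (inner (S x) x)) /\
  (forall x, S (S x) = G x).

(** (K, J) is a completion H(G) of H w.r.t. <x,y>_G = <G^{1/2}x, G^{1/2}y>:
    J : H -> K linear, with dense range, and <J x, J y>_K = <S x, S y>_H. *)
Definition completion_of {X Y : InnerSpace} (S : X -> X) (J : X -> Y) : Prop :=
  linear_map J /\ (forall x y, inner (J x) (J y) = inner (S x) (S y)) /\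
  dense (fun k : Y => exists x, k = J x).

(** The operator A (domain D, action f) viewed as an operator in H(G),
    with domain D(A) (embedded via J). *)
Definition op_in_completion {X Y : InnerSpace} (D : X -> Prop) (f : X -> X)
  (J : X -> Y) : Y -> Y -> Prop :=
  fun k z => exists xi, D xi /\ k = J xi /\ z = J (f xi).

Definition quasi_hermitian {X : InnerSpace} (D : X -> Prop) (f : X -> X)
  (DG : X -> Prop) (G : X -> X) : Prop :=
  (forall x, D x -> DG x) /\
  forall xi eta, D xi -> D eta -> inner (f xi) (G eta) = inner (G xi) (f eta).

(* Main.v *)
Require Import Defs.
From Stdlib Require Import Reals Lra Lia ClassicalEpsilon.
Open Scope R_scope.

Lemma Cx_eq (a b : Cx) : Cre a = Cre b -> Cim a = Cim b -> a = b.
Proof. destruct a, b; simpl; intros -> ->; reflexivity. Qed.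

Definition Cm1 : Cx := mkC (-1) 0.

Section Alg.
Variable X : InnerSpace.
Implicit Types x y z a b c : X.

Lemma add0l x : vadd (vzero X) x = x.
Proof. rewrite vadd_comm; apply vadd_zero. Qed.

Lemma addopl x : vadd (vopp x) x = vzero X.
Proof. rewrite vadd_comm; apply vadd_opp. Qed.

Lemma add_cancel a x y : vadd a x = vadd a y -> x = y.
Proof.
  intro H. rewrite <- (add0l x), <- (add0l y), <- (addopl a), <- !vadd_assoc, H.
  reflexivity.
Qed.

Lemma opp_unique x y : vadd x y = vzero X -> y = vopp x.
Proof.
  intro H. apply (add_cancel x). rewrite H, vadd_opp. reflexivity.
Qed.

Lemma scal0 x : vscal Defs.C0 x = vzero X.
Proof.
  assert (E : Cadd Defs.C0 Defs.C0 = Defs.C0) by (apply Cx_eq; simpl; ring).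
  pose proof (vscal_adds X Defs.C0 Defs.C0 x) as H. rewrite E in H.
  symmetry. apply (add_cancel (vscal Defs.C0 x)). rewrite vadd_zero. exact H.
Qed.

Lemma opp_scal x : vopp x = vscal Cm1 x.
Proof.
  symmetry. apply opp_unique.
  rewrite <- (vscal_one X x) at 1. rewrite <- vscal_adds.
  replace (Cadd Defs.C1 Cm1) with Defs.C0 by (apply Cx_eq; simpl; ring).
  apply scal0.
Qed.

Lemma opp_opp x : vopp (vopp x) = x.
Proof. symmetry. apply opp_unique. apply addopl. Qed.

Lemma opp_add x y : vopp (vadd x y) = vadd (vopp x) (vopp y).
Proof. rewrite !opp_scal. apply vscal_addv. Qed.

Lemma sub_swap a b : vopp (vsub a b) = vsub b a.
Proof. unfold vsub. rewrite opp_add, opp_opp, vadd_comm. reflexivity. Qed.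

Lemma sub_chain a b c : vsub a c = vadd (vsub a b) (vsub b c).
Proof.
  unfold vsub. rewrite vadd_assoc, <- (vadd_assoc X a (vopp b) b), addopl, vadd_zero.
  reflexivity.
Qed.

Lemma sub_eq0 a b : vsub a b = vzero X -> a = b.
Proof.
  unfold vsub. intro H. apply opp_unique in H.
  rewrite <- (opp_opp a), <- H, opp_opp. reflexivity.
Qed.

Lemma sub_diag a : vsub a a = vzero X.
Proof. apply vadd_opp. Qed.

Lemma inner_add_r x y z : inner x (vadd y z) = Cadd (inner x y) (inner x z).
Proof.
  rewrite inner_conj, inner_add_l, (inner_conj X x y), (inner_conj X x z).
  apply Cx_eq; simpl; ring.
Qed.

Lemma inner_scal_r (k : Cx) x y : inner x (vscal k y) = Cmul (Cconj k) (inner x y).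
Proof.
  rewrite inner_conj, inner_scal_l, (inner_conj X x y).
  apply Cx_eq; simpl; ring.
Qed.

Lemma inner_re_sym x y : Cre (inner y x) = Cre (inner x y).
Proof. rewrite inner_conj. reflexivity. Qed.

Definition q x := Cre (inner x x).

Lemma q_comb a b t : q (vadd a (vscal (mkC t 0) b)) = q a + 2 * t * Cre (inner a b) + t * t * q b.
Proof.
  unfold q. rewrite inner_add_l, !inner_add_r, !inner_scal_l, !inner_scal_r, ?inner_scal_l.
  simpl. rewrite (inner_re_sym a b). ring.
Qed.

Lemma q_add a b : q (vadd a b) = q a + 2 * Cre (inner a b) + q b.
Proof.
  rewrite <- (vscal_one X b) at 1. unfold Defs.C1. rewrite q_comb. ring.
Qed.

Lemma q_ge0 x : 0 <= q x.
Proof. apply inner_pos. Qed.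

Lemma inner_zero_r a : inner a (vzero X) = Defs.C0.
Proof. rewrite <- (scal0 a), inner_scal_r. apply Cx_eq; simpl; ring. Qed.

Lemma CS a b : Cre (inner a b) * Cre (inner a b) <= q a * q b.
Proof.
  destruct (Req_dec (q b) 0) as [Hb|Hb].
  - apply inner_def in Hb. rewrite Hb, inner_zero_r. simpl.
    pose proof (q_ge0 a). pose proof (q_ge0 (vzero X)). nra.
  - pose proof (q_ge0 b). assert (Hp : 0 < q b) by lra.
    set (B := Cre (inner a b)).
    pose proof (q_ge0 (vadd a (vscal (mkC (- B / q b) 0) b))) as H0.
    rewrite q_comb in H0. fold B in H0.
    assert (E : q a + 2 * (- B / q b) * B + - B / q b * (- B / q b) * q b
              = q a - B * B / q b) by (field; lra).
    rewrite E in H0.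
    assert (B * B / q b <= q a) by lra.
    apply Rmult_le_reg_r with (/ q b). apply Rinv_0_lt_compat; lra.
    replace (q a * q b * / q b) with (q a) by (field; lra). lra.
Qed.

Lemma norm_ge0 x : 0 <= norm x.
Proof. apply sqrt_pos. Qed.

Lemma norm_sq x : norm x * norm x = q x.
Proof. apply sqrt_sqrt, q_ge0. Qed.

Lemma norm_triangle a b : norm (vadd a b) <= norm a + norm b.
Proof.
  pose proof (norm_sq a). pose proof (norm_sq b). pose proof (norm_sq (vadd a b)).
  pose proof (norm_ge0 a). pose proof (norm_ge0 b). pose proof (norm_ge0 (vadd a b)).
  rewrite q_add in H1. pose proof (CS a b).
  assert (Cre (inner a b) <= norm a * norm b).
  { destruct (Rle_dec (Cre (inner a b)) 0). nra.
    apply Rsqr_incr_0_var. unfold Rsqr. replace (norm a * norm b * (norm a * norm b)) with (q a * q b) by (rewrite <- H, <- H0; ring). lra. nra. }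
  apply Rsqr_incr_0_var. unfold Rsqr. nra. nra.
Qed.

Lemma q_opp x : q (vopp x) = q x.
Proof.
  unfold q. rewrite opp_scal, inner_scal_l, inner_scal_r. simpl. ring.
Qed.

Lemma norm_opp x : norm (vopp x) = norm x.
Proof. unfold norm. fold (q (vopp x)) (q x). rewrite q_opp. reflexivity. Qed.

Lemma norm_sub_sym a b : norm (vsub a b) = norm (vsub b a).
Proof. rewrite <- sub_swap, norm_opp. reflexivity. Qed.

Lemma norm_sub_tri a b c : norm (vsub a c) <= norm (vsub a b) + norm (vsub b c).
Proof. rewrite (sub_chain a b c). apply norm_triangle. Qed.

Lemma norm0_eq x : norm x = 0 -> x = vzero X.
Proof.
  intro H. apply inner_def. pose proof (norm_sq x). unfold q in H0. rewrite H in H0. lra.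
Qed.

End Alg.

Lemma lin_sub {X Y : InnerSpace} (f : X -> Y) : linear_map f ->
  forall x y, f (vsub x y) = vsub (f x) (f y).
Proof.
  intros L x y. unfold vsub. destruct (L Defs.C1 x (vopp y)) as [-> _].
  rewrite !opp_scal. destruct (L Cm1 y y) as [_ ->]. reflexivity.
Qed.

Lemma inv_mono (N n : nat) : (N <= n)%nat -> / (INR n + 1) <= / (INR N + 1).
Proof.
  intro h. apply Rinv_le_contravar. pose proof (pos_INR N); lra.
  apply le_INR in h; lra.
Qed.

Lemma inv_small (e : R) : 0 < e -> exists N : nat, / (INR N + 1) < e.
Proof.
  intro he. destruct (archimed_cor1 e he) as [N [h1 h2]]. exists N.
  eapply Rle_lt_trans; [|exact h1]. apply Rinv_le_contravar.
  apply lt_0_INR; lia. lra.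
Qed.

Lemma surj (H K : HilbertSpace) (J : H -> K) (Ms c : R) :
  linear_map J -> dense (fun k : K => exists x, k = J x) -> 0 < Ms -> 0 < c ->
  (forall x, norm (J x) <= Ms * norm x) -> (forall x, norm x <= c * norm (J x)) ->
  forall k, exists x, k = J x.
Proof.
  intros JL Jd HMs Hc Jup Jlo k.
  assert (Hx : forall n : nat, exists x, norm (vsub k (J x)) < / (INR n + 1)).
  { intro n. destruct (Jd k (/ (INR n + 1))) as [y [[x ->] hx]].
    apply Rinv_0_lt_compat. pose proof (pos_INR n); lra. eauto. }
  set (u := fun n => proj1_sig (constructive_indefinite_description _ (Hx n))).
  assert (Hu : forall n, norm (vsub k (J (u n))) < / (INR n + 1)).
  { intro n. unfold u. exact (proj2_sig (constructive_indefinite_description _ (Hx n))). }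
  assert (Cu : cauchy u).
  { intros eps He. destruct (inv_small (eps / (2 * c))) as [N HN].
    apply Rdiv_lt_0_compat; lra.
    exists N. intros n m hn hm.
    eapply Rle_lt_trans. apply Jlo. rewrite lin_sub by exact JL.
    assert (T := norm_sub_tri _ (J (u n)) k (J (u m))).
    rewrite (norm_sub_sym _ (J (u n)) k) in T.
    pose proof (Hu n). pose proof (Hu m). pose proof (inv_mono N n hn). pose proof (inv_mono N m hm).
    assert (H4 : norm (vsub (J (u n)) (J (u m))) < eps / c).
    { assert (eps / c = 2 * (eps / (2 * c))) by (field; lra). lra. }
    apply Rmult_lt_compat_l with (r := c) in H4; [|lra].
    replace (c * (eps / c)) with eps in H4 by (field; lra). exact H4. }
  destruct (hs_complete H Cu) as [x Hconv].
  exists x. symmetry. apply sub_eq0.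
  apply norm0_eq.
  assert (A : forall e, 0 < e -> norm (vsub (J x) k) < e).
  { intros e he. destruct (Hconv (e / (2 * Ms))) as [N1 HN1].
    apply Rdiv_lt_0_compat; lra.
    destruct (inv_small (e / 2)) as [N2 HN2]. lra.
    set (n := Nat.max N1 N2).
    assert (h1 := HN1 n (Nat.le_max_l _ _)).
    assert (h2 := inv_mono N2 n (Nat.le_max_r _ _)).
    assert (h3 := Hu n).
    assert (T := norm_sub_tri _ (J x) (J (u n)) k).
    rewrite <- lin_sub in T by exact JL.
    rewrite (norm_sub_sym _ (J (u n)) k) in T.
    assert (h4 := Jup (vsub x (u n))). rewrite norm_sub_sym in h4.
    apply Rmult_lt_compat_l with (r := Ms) in h1; [|lra].
    replace (Ms * (e / (2 * Ms))) with (e / 2) in h1 by (field; lra).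
    lra. }
  pose proof (norm_ge0 _ (vsub (J x) k)).
  destruct (Req_dec (norm (vsub (J x) k)) 0) as [E|E]; auto.
  specialize (A (norm (vsub (J x) k))). lra.
Qed.

Lemma sa_sym {X : InnerSpace} (T : X -> X) :
  self_adjoint (graph_of (fun _ => True) T) -> forall x y, inner (T x) y = inner x (T y).
Proof.
  intros [_ h] x y. apply (proj1 (h y (T y)) (conj I eq_refl) x (T x) (conj I eq_refl)).
Qed.

Lemma bnd_pos {X Y : InnerSpace} (f : X -> Y) : bounded_map f ->
  exists M, 0 < M /\ forall x, norm (f x) <= M * norm x.
Proof.
  intros [M HM]. exists (Rmax M 1). split. pose proof (Rmax_r M 1); lra.
  intro x. eapply Rle_trans. apply HM. apply Rmult_le_compat_r. apply norm_ge0. apply Rmax_l.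
Qed.

Lemma norm_zero (X : InnerSpace) : norm (vzero X) = 0.
Proof. unfold norm. rewrite inner_zero_r. simpl. apply sqrt_0. Qed.

Theorem proposition5p11 (H : HilbertSpace) (G : H -> H)
  (DA : H -> Prop) (A : H -> H) (S : H -> H) (K : HilbertSpace) (J : H -> K) :
  bounded_metric G ->
  linear_op DA A -> dense DA -> closed_op DA A ->
  pos_sqrt S G -> completion_of S J ->
  (self_adjoint (op_in_completion DA A J) ->
     symmetric_op (graph_of DA (fun x => G (A x))) /\
     quasi_hermitian DA A (fun _ => True) G) /\
  ((exists Ginv : H -> H, linear_map Ginv /\ bounded_map Ginv /\
      forall x, Ginv (G x) = x /\ G (Ginv x) = x) ->
   (self_adjoint (op_in_completion DA A J) <->
    self_adjoint (graph_of DA (fun x => G (A x))))).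
Proof.
  intros [GL [GB [Gsa Gpos]]] HL Hd Hc [SL [SB [Ssa [Spos SS]]]] [JL [Jin Jd]].
  pose proof (sa_sym _ Ssa) as Sadj. pose proof (sa_sym _ Gsa) as Gadj.
  assert (JG : forall u v, inner (J u) (J v) = inner (G u) v).
  { intros u v. rewrite Jin, <- SS. symmetry. apply Sadj. }
  assert (JG' : forall u v, inner (J u) (J v) = inner u (G v)).
  { intros u v. rewrite Jin, <- SS. apply Sadj. }
  assert (Hsym : self_adjoint (op_in_completion DA A J) ->
     forall eta xi, DA eta -> DA xi -> inner (G (A xi)) eta = inner xi (G (A eta))).
  { intros [_ TK] eta xi De Dx.
    assert (h := proj1 (TK (J eta) (J (A eta))) (ex_intro _ eta (conj De (conj eq_refl eq_refl)))
                  (J xi) (J (A xi)) (ex_intro _ xi (conj Dx (conj eq_refl eq_refl)))).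
    rewrite JG, JG' in h. exact h. }
  assert (Gdense : dense (gdom (graph_of DA (fun x => G (A x))))).
  { intros x eps he. destruct (Hd x eps he) as [y [Dy hy]]. exists y. split; auto.
    exists (G (A y)). split; auto. }
  split.
  { intro TKsa. split.
    - split. exact Gdense.
      intros eta zeta [De ->] xi y [Dx ->]. apply Hsym; auto.
    - split. auto. intros xi eta Dx De.
      rewrite <- Gadj, (Hsym TKsa eta xi De Dx). symmetry. apply Gadj. }
  intros [Gi [GiL [GiB GiK]]].
  destruct (bnd_pos _ SB) as [Ms [HMs Sup]].
  destruct (bnd_pos _ GiB) as [Mg [HMg Giup]].
  assert (NJ : forall x, norm (J x) = norm (S x)).
  { intro x. unfold norm. rewrite Jin. reflexivity. }
  assert (Jup : forall x, norm (J x) <= Ms * norm x).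
  { intro x. rewrite NJ. apply Sup. }
  assert (Jlo : forall x, norm x <= (Mg * Ms) * norm (J x)).
  { intro x. rewrite NJ. rewrite <- (proj1 (GiK x)) at 1.
    eapply Rle_trans. apply Giup. rewrite Rmult_assoc. apply Rmult_le_compat_l. lra.
    rewrite <- SS. apply Sup. }
  assert (Jinj : forall x y, J x = J y -> x = y).
  { intros x y E. apply sub_eq0. apply norm0_eq.
    pose proof (Jlo (vsub x y)). rewrite lin_sub, E, sub_diag, norm_zero in H0 by exact JL.
    pose proof (norm_ge0 _ (vsub x y)). lra. }
  assert (Jsurj : forall k, exists x, k = J x).
  { apply (surj H K J Ms (Mg * Ms)); auto. apply Rmult_lt_0_compat; lra. }
  assert (Gcan : forall x y, G x = G y -> x = y).
  { intros x y E. rewrite <- (proj1 (GiK x)), <- (proj1 (GiK y)), E. reflexivity. }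
  split.
  - intros TKsa. split. exact Gdense. intros eta zeta. split.
    + intros [De ->] xi y [Dx ->]. apply Hsym; auto.
    + intro Hadj. destruct TKsa as [_ TK].
      assert (h : op_in_completion DA A J (J eta) (J (Gi zeta))).
      { apply TK. intros k z [x [Dx [-> ->]]].
        rewrite JG, JG', (proj2 (GiK zeta)). apply Hadj. split; auto. }
      destruct h as [xi [Dxi [E1 E2]]].
      apply Jinj in E1. apply Jinj in E2. subst xi. split; auto.
      rewrite <- E2, (proj2 (GiK zeta)). reflexivity.
  - intros [_ GAs]. split.
    + intros k eps he. destruct (Jsurj k) as [x ->].
      destruct (Hd x (eps / Ms)) as [y [Dy hy]]. apply Rdiv_lt_0_compat; lra.
      exists (J y). split. exists (J (A y)). exists y. auto.
      rewrite <- lin_sub by exact JL. eapply Rle_lt_trans. apply Jup.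
      apply Rmult_lt_compat_l with (r := Ms) in hy; [|lra].
      replace (Ms * (eps / Ms)) with eps in hy by (field; lra). exact hy.
    + intros k z. split.
      * intros [eta [De [-> ->]]] xi y [x [Dx [-> ->]]].
        rewrite JG, JG'.
        exact (proj1 (GAs _ _) (conj De eq_refl) x (G (A x)) (conj Dx eq_refl)).
      * intro Hadj. destruct (Jsurj k) as [eta ->]. destruct (Jsurj z) as [w ->].
        assert (h : adjoint_graph (graph_of DA (fun x => G (A x))) eta (G w)).
        { intros xi y [Dxi ->].
          specialize (Hadj (J xi) (J (A xi)) (ex_intro _ xi (conj Dxi (conj eq_refl eq_refl)))).
          rewrite JG, JG' in Hadj. exact Hadj. }
        apply GAs in h. destruct h as [De E]. apply Gcan in E. subst w.
        exists eta. auto.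
Qed.
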